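(* Let $(\Omega,\nu)$ be a measure space and $u,v\colon\Omega\to(0,1]$ measurable functions such that, for some $\alpha>0$, $$\int_\Omega|\log u|\,d\nu<\infty\qquad\text{and}\qquad\int_\Omega u\,v^{-\alpha}\,d\nu<\infty .$$ Then $\displaystyle\int_\Omega|\log v|\,d\nu<\infty$. *)

(* Defs.v *)
From HB Require Import structures.
From mathcomp Require Import all_boot all_order all_algebra.
From mathcomp Require Import all_classical all_reals all_analysis.

(* Main.v *)
Require Import Defs.
From HB Require Import structures.
From mathcomp Require Import all_boot all_order all_algebra.
From mathcomp Require Import all_classical all_reals all_analysis.
From mathcomp Require Import lra measurable_realfun.
Import Order.TTheory GRing.Theory Num.Theory.
Local Open Scope classical_set_scope.
Local Open Scope ring_scope.

Lemma ln_le_id (R : realType) (y : R) : 0 < y -> ln y <= y.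
Proof.
move=> y0; have h := @le_ln1Dx R (y - 1).
have e : 1 + (y - 1) = y by rewrite addrCA subrr addr0.
rewrite e in h; have := h ltac:(lra); lra.
Qed.

Theorem lemma4p2 (d : measure_display) (T : measurableType d) (R : realType)
  (nu : {measure set T -> \bar R}) (u v : T -> R) (alpha : R)
  (mu_ : measurable_fun setT u) (mv : measurable_fun setT v)
  (hu : forall x, 0 < u x <= 1) (hv : forall x, 0 < v x <= 1)
  (halpha : 0 < alpha)
  (hlogu : (\int[nu]_x (`|ln (u x)|)%:E < +oo)%E)
  (huv : (\int[nu]_x (u x * v x `^ (- alpha))%:E < +oo)%E) :
  (\int[nu]_x (`|ln (v x)|)%:E < +oo)%E.
Proof.
have mf : measurable_fun setT (fun x => ((`|ln (u x)|)%:E : \bar R)).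
  apply/measurable_EFinP; apply: measurableT_comp => //.
  exact: measurableT_comp.
have mg : measurable_fun setT (fun x => ((u x * v x `^ (- alpha))%:E : \bar R)).
  apply/measurable_EFinP; apply: measurable_funM => //.
  by apply: (measurableT_comp (f := fun y : R => y `^ (- alpha))) => //; exact: measurable_powR.
have mh : measurable_fun setT (fun x => ((`|ln (v x)|)%:E : \bar R)).
  apply/measurable_EFinP; apply: measurableT_comp => //.
  exact: measurableT_comp.
have g0 x : 0 <= u x * v x `^ (- alpha).
  by apply: mulr_ge0; [have /andP[/ltW] := hu x|apply: powR_ge0].
have pt x : `|ln (v x)| <= alpha^-1 * (u x * v x `^ (- alpha) + `|ln (u x)|).
  have /andP[u0 u1] := hu x; have /andP[v0 v1] := hv x.
  have w0 : 0 < v x `^ (- alpha) by apply: powR_gt0.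
  have key : ln (u x * v x `^ (- alpha)) = ln (u x) + - alpha * ln (v x).
    by rewrite lnM ?posrE // ln_powR.
  have := @ln_le_id R _ (mulr_gt0 u0 w0); rewrite key => h.
  rewrite ler_pdivlMl // ler0_norm ?ln_le0 // ler0_norm ?ln_le0 //.
  move: h; rewrite mulNr; lra.
apply: (@le_lt_trans _ _ (\int[nu]_x ((alpha^-1)%:E * ((u x * v x `^ (- alpha))%:E + (`|ln (u x)|)%:E)))%E).
  apply: ge0_le_integral => //.
  - apply: measurable_funeM.
    exact: emeasurable_funD.
  - by move=> x _; rewrite -EFinD -EFinM lee_fin.
rewrite ge0_integralZl //.
2: exact: emeasurable_funD.
2: by move=> x _; rewrite adde_ge0 // lee_fin.
2: by rewrite lee_fin invr_ge0 ltW.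
rewrite ge0_integralD //.
2: by move=> x _; rewrite lee_fin.
apply: lte_mul_pinfty => //; first by rewrite lee_fin invr_ge0 ltW.
exact: lte_add_pinfty.
Qed.
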